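(* Let $(B,D,d,\theta)$ be a regular E-system and $\psi:Q\to\operatorname{Coker}d$ a ring homomorphism. Let $k\in Z^3_{Shu}(\operatorname{Coker}d,\operatorname{Ker}d)$ be the structure cocycle of the reduced Ann-category of $\mathcal A_{B\to D}$. Then there exists a ring extension of $B$ by $Q$ of type $B\to D$ inducing $\psi$ if and only if the class $\overline{\psi^*k}$ vanishes in $H^3_{Shu}(Q,\operatorname{Ker}d)$. Moreover, if $\overline{\psi^*k}=0$, there is a bijection $$\mathrm{Ext}_{B\to D}(Q,B,\psi)\leftrightarrow H^2_{Shu}(Q,\operatorname{Ker}d).$$
   Context: E-system $(B,D,d,\theta)$: $B$ a ring, $D$ a unital ring, $d:B\to D$, $\theta:D\to M_B$ ring homomorphisms into the ring of bimultiplications of $B$ with $\theta(d(b))=\mu_b$ (inner bimultiplication), $d(\theta_xb)=x\,d(b)$, $d(b\theta_x)=d(b)x$; regular if $\theta(1)=1$ and any two elements of $\theta(D)$ are permutable ($\sigma(a\tau)=(\sigma a)\tau$, $\tau(a\sigma)=(\tau a)\sigma$). Then $\operatorname{Ker}d$ is a $\operatorname{Coker}d$-bimodule via $sa=\theta_x a$, $as=a\theta_x$ ($x\in s$). Associated Ann-category $\mathcal A_{B\to D}$: objects elements of $D$, morphisms $x\to y$ the $b\in B$ with $y=d(b)+x$, composition addition, $\oplus,\otimes$ given by $+,\cdot$ on objects and $b+b'$, $bb'+b\theta_{x'}+\theta_xb'$ on morphisms; all constraints identities; it is a regular Ann-category with $\pi_0=\operatorname{Coker}d$, $\pi_1=\operatorname{Ker}d$.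 By structure transport it is Ann-equivalent to a reduced Ann-category of type $(\operatorname{Coker}d,\operatorname{Ker}d)$ (objects elements of $\operatorname{Coker}d$, morphisms $(s,a):s\to s$, $a\in\operatorname{Ker}d$) whose constraints form a Shukla 3-cocycle $k\in Z^3_{Shu}(\operatorname{Coker}d,\operatorname{Ker}d)$, well defined up to cohomology; $\psi^*k\in Z^3_{Shu}(Q,\operatorname{Ker}d)$ is its pullback along $\psi$ ($\operatorname{Ker}d$ a $Q$-bimodule via $\psi$). $H^n_{Shu}$ denotes Shukla cohomology of rings. A ring extension of $B$ by $Q$ of type $B\to D$: exact sequence of ring homomorphisms $0\to B\xrightarrow{j}E\xrightarrow{p}Q\to0$ with a ring homomorphism $\varepsilon:E\to D$ such that $(B,E,j,\theta')$ ($\theta'$ of bimultiplication type: $\theta'_eb=eb$, $b\theta'_e=be$) is an E-system and $(\mathrm{id}_B,\varepsilon)$ is a morphism of E-systems (i.e. $\varepsilon j=d$ and $eb=\theta_{\varepsilon(e)}b$, $be=b\theta_{\varepsilon(e)}$); it induces the ring homomorphism $\psi:Q\to\operatorname{Coker}d$ with $\psi p=q\varepsilon$, $q$ the projection $D\to D/\operatorname{Im}d$. Extensions $(E,j,p,\varepsilon)$, $(E',j',p',\varepsilon')$ are equivalent if there is a ring homomorphism $\eta:E\to E'$ with $\eta j=j'$, $p'\eta=p$, $\varepsilon'\eta=\varepsilon$; $\mathrm{Ext}_{B\to D}(Q,B,\psi)$ is the set of equivalence classes of such extensions inducing $\psi$. *)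

(* Defs.v *)
From HB Require Import structures.
From mathcomp Require Import all_boot all_algebra.
Set Implicit Arguments. Unset Strict Implicit. Unset Printing Implicit Defensive.
Import GRing.Theory.
Local Open Scope ring_scope.

Record nuRing := NURing {
  nur_car :> zmodType;
  nur_mul : nur_car -> nur_car -> nur_car;
  nur_mulA : forall a b c, nur_mul a (nur_mul b c) = nur_mul (nur_mul a b) c;
  nur_mulDl : forall a b c, nur_mul (a + b) c = nur_mul a c + nur_mul b c;
  nur_mulDr : forall a b c, nur_mul a (b + c) = nur_mul a b + nur_mul a c }.

(* An E-system (B, D, d, theta).  theta : D -> M_B is given by its two
   components: es_thl x a = theta_x a  and  es_thr a x = a theta_x.
   The ring M_B of bimultiplications has (sigma tau) a = sigma (tau a),
   a (sigma tau) = (a sigma) tau. *)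
Record Esystem (B : nuRing) (D : pzRingType) := ESystem {
  es_d : B -> D;
  es_dD : forall a b, es_d (a + b) = es_d a + es_d b;
  es_dM : forall a b, es_d (nur_mul a b) = es_d a * es_d b;
  es_thl : D -> B -> B;
  es_thr : B -> D -> B;
  es_thlD : forall x a b, es_thl x (a + b) = es_thl x a + es_thl x b;
  es_thrD : forall x a b, es_thr (a + b) x = es_thr a x + es_thr b x;
  es_thlM : forall x a b, es_thl x (nur_mul a b) = nur_mul (es_thl x a) b;
  es_thrM : forall x a b, es_thr (nur_mul a b) x = nur_mul a (es_thr b x);
  es_thlr : forall x a b, nur_mul a (es_thl x b) = nur_mul (es_thr a x) b;
  es_thDl : forall x y a, es_thl (x + y) a = es_thl x a + es_thl y a;
  es_thDr : forall x y a, es_thr a (x + y) = es_thr a x + es_thr a y;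
  es_thMl : forall x y a, es_thl (x * y) a = es_thl x (es_thl y a);
  es_thMr : forall x y a, es_thr a (x * y) = es_thr (es_thr a x) y;
  es_inner_l : forall b a, es_thl (es_d b) a = nur_mul b a;
  es_inner_r : forall b a, es_thr a (es_d b) = nur_mul a b;
  es_d_thl : forall x b, es_d (es_thl x b) = x * es_d b;
  es_d_thr : forall x b, es_d (es_thr b x) = es_d b * x }.

Section Defs.
Variables (B : nuRing) (D : pzRingType) (S : Esystem B D).
Local Notation d := (es_d S).
Local Notation thl := (es_thl S).
Local Notation thr := (es_thr S).

Definition es_regular : Prop :=
  (forall a, thl 1 a = a) /\ (forall a, thr a 1 = a) /\
  (forall x y a, thl x (thr a y) = thr (thl x a) y).

Definition is_coker (C : pzRingType) (q : {rmorphism D -> C}) : Prop :=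
  (forall s, exists x, q x = s) /\ (forall x, q x = 0 <-> exists b, x = d b).

Variables (C : pzRingType) (q : {rmorphism D -> C}).

(* Data of the structure transport of A_{B->D} to its reduced Ann-category:
   a normalized section u of q, and elements f, g of B realizing the
   isomorphisms u s (+) u t -> u (s+t),  u s (x) u t -> u (s t). *)
Definition transport_data (u : C -> D) (f g : C -> C -> B) : Prop :=
  (forall s, q (u s) = s) /\ u 0 = 0 /\
  (forall s t, d (f s t) = u s + u t - u (s + t)) /\
  (forall s t, d (g s t) = u s * u t - u (s * t)) /\
  (forall t, f 0 t = 0 /\ f t 0 = 0 /\ g 0 t = 0 /\ g t 0 = 0).

(* Components (xi, eta, alpha, lambda, rho) of the structure cocycle k
   of the reduced Ann-category (values in Ker d). *)
Section Cocycle.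
Variables (u : C -> D) (f g : C -> C -> B).
Definition k_xi r s t := f r s + f (r + s) t - f s t - f r (s + t).
Definition k_eta s t := f s t - f t s.
Definition k_alpha r s t :=
  thl (u r) (g s t) + g r (s * t) - thr (g r s) (u t) - g (r * s) t.
Definition k_lambda r s t :=
  thl (u r) (f s t) + g r (s + t) - g r s - g r t - f (r * s) (r * t).
Definition k_rho r s t :=
  thr (f r s) (u t) + g (r + s) t - g r t - g s t - f (r * t) (s * t).
End Cocycle.

(* The Shukla (Mac Lane) low-dimensional cochain complex of a ring Q with
   coefficients in Ker d, made a Q-bimodule by actions L, R. *)
Section Complex.
Variables (Q : pzRingType) (L : Q -> B -> B) (R : B -> Q -> B).

Definition in_ker (a : B) := d a = 0.

Definition cochain2 (mu nu : Q -> Q -> B) : Prop :=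
  (forall x y, in_ker (mu x y) /\ in_ker (nu x y)) /\
  (forall x, mu 0 x = 0 /\ mu x 0 = 0 /\ nu 0 x = 0 /\ nu x 0 = 0).

Definition is_d2 (mu nu : Q -> Q -> B) (xi : Q -> Q -> Q -> B) (eta : Q -> Q -> B)
  (al la rh : Q -> Q -> Q -> B) : Prop :=
  forall x y z,
    xi x y z = mu x y + mu (x + y) z - mu y z - mu x (y + z) /\
    eta x y = mu x y - mu y x /\
    al x y z = L x (nu y z) + nu x (y * z) - R (nu x y) z - nu (x * y) z /\
    la x y z = L x (mu y z) + nu x (y + z) - nu x y - nu x z - mu (x * y) (x * z) /\
    rh x y z = R (mu x y) z + nu (x + y) z - nu x z - nu y z - mu (x * z) (y * z).

Definition is_coboundary3 xi eta al la rh : Prop :=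
  exists mu nu, cochain2 mu nu /\ is_d2 mu nu xi eta al la rh.

Definition zeroQ3 (x y z : Q) : B := 0.
Definition zeroQ2 (x y : Q) : B := 0.

Definition is_cocycle2 (c : (Q -> Q -> B) * (Q -> Q -> B)) : Prop :=
  cochain2 c.1 c.2 /\ is_d2 c.1 c.2 zeroQ3 zeroQ2 zeroQ3 zeroQ3 zeroQ3.

Definition cohomologous2 (c c' : (Q -> Q -> B) * (Q -> Q -> B)) : Prop :=
  exists t : Q -> B, (forall x, in_ker (t x)) /\ t 0 = 0 /\
    forall x y, c'.1 x y = c.1 x y + (t x + t y - t (x + y)) /\
                c'.2 x y = c.2 x y + (L x (t y) + R (t x) y - t (x * y)).
End Complex.

Record ext_type (Q : pzRingType) (psi : {rmorphism Q -> C}) := ExtT {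
  ext_car : pzRingType;
  ext_j : B -> ext_car;
  ext_p : {rmorphism ext_car -> Q};
  ext_eps : {rmorphism ext_car -> D};
  ext_jD : forall a b, ext_j (a + b) = ext_j a + ext_j b;
  ext_jM : forall a b, ext_j (nur_mul a b) = ext_j a * ext_j b;
  ext_j_inj : injective ext_j;
  ext_p_surj : forall y, exists e, ext_p e = y;
  ext_exact : forall e, ext_p e = 0 <-> exists b, e = ext_j b;
  ext_eps_j : forall b, ext_eps (ext_j b) = d b;
  ext_eps_l : forall e b, ext_j (thl (ext_eps e) b) = e * ext_j b;
  ext_eps_r : forall e b, ext_j (thr b (ext_eps e)) = ext_j b * e;
  ext_induces : forall e, q (ext_eps e) = psi (ext_p e) }.

Definition ext_equiv (Q : pzRingType) (psi : {rmorphism Q -> C})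
  (X Y : ext_type psi) : Prop :=
  exists eta : {rmorphism ext_car X -> ext_car Y},
    (forall b, eta (ext_j X b) = ext_j Y b) /\
    (forall e, ext_p Y (eta e) = ext_p X e) /\
    (forall e, ext_eps Y (eta e) = ext_eps X e).

Section Pullback.
Variables (Q : pzRingType) (psi : {rmorphism Q -> C}) (u : C -> D) (f g : C -> C -> B).

Definition actL (x : Q) (a : B) := thl (u (psi x)) a.
Definition actR (a : B) (x : Q) := thr a (u (psi x)).

Definition pullback_obstruction_vanishes : Prop :=
  is_coboundary3 actL actR
    (fun x y z => k_xi f (psi x) (psi y) (psi z))
    (fun x y => k_eta f (psi x) (psi y))
    (fun x y z => k_alpha u g (psi x) (psi y) (psi z))
    (fun x y z => k_lambda u f g (psi x) (psi y) (psi z))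
    (fun x y z => k_rho u f g (psi x) (psi y) (psi z)).

Definition ext_H2_bijection : Prop :=
  exists Phi : ext_type psi -> (Q -> Q -> B) * (Q -> Q -> B),
    (forall X, is_cocycle2 actL actR (Phi X)) /\
    (forall X Y, ext_equiv X Y <-> cohomologous2 actL actR (Phi X) (Phi Y)) /\
    (forall c, is_cocycle2 actL actR c ->
       exists X, cohomologous2 actL actR (Phi X) c).
End Pullback.
End Defs.

(* Main.v *)
Require Import Defs.
From HB Require Import structures.
From mathcomp Require Import all_boot all_algebra.
From Stdlib Require Import ClassicalEpsilon.
Set Implicit Arguments. Unset Strict Implicit. Unset Printing Implicit Defensive.
Import GRing.Theory.
Local Open Scope ring_scope.


Inductive zex := ZAt of nat | ZZero | ZAdd of zex & zex | ZOpp of zex.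

Section ZRefl.
Variable V : zmodType.
Fixpoint zeval (env : seq V) (e : zex) : V :=
  match e with
  | ZAt n => nth 0 env n
  | ZZero => 0
  | ZAdd a b => zeval env a + zeval env b
  | ZOpp a => - zeval env a
  end.
Fixpoint ladd (s t : seq int) : seq int :=
  match s, t with
  | [::], _ => t
  | _, [::] => s
  | a :: s', b :: t' => (a + b) :: ladd s' t'
  end.
Definition lopp (s : seq int) := map (fun a => - a) s.
Definition latom (n : nat) : seq int := rcons (nseq n 0%Z) 1.
Fixpoint znf (e : zex) : seq int :=
  match e with
  | ZAt n => latom n
  | ZZero => [::]
  | ZAdd a b => ladd (znf a) (znf b)
  | ZOpp a => lopp (znf a)
  end.
Fixpoint den (env : seq V) (s : seq int) : V :=
  match s with
  | [::] => 0
  | c :: s' => (head 0 env) *~ c + den (behead env) s'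
  end.
Lemma den_add env s t : den env (ladd s t) = den env s + den env t.
Proof.
elim: s t env => [|a s IH] [|b t] env /=; rewrite ?add0r ?addr0 //.
by rewrite IH mulrzDr addrACA.
Qed.
Lemma den_opp env s : den env (lopp s) = - den env s.
Proof.
elim: s env => [|a s IH] env /=; first by rewrite oppr0.
by rewrite IH mulrNz opprD.
Qed.
Lemma den_atom env n : den env (latom n) = nth 0 env n.
Proof.
rewrite /latom; elim: n env => [|n IH] env /=.
  by case: env => [|x env] /=; rewrite ?mul0rz addr0.
rewrite IH (_ : head 0 env *~ Posz 0 = 0) // add0r.
destruct env as [|x e]; simpl; [by rewrite !nth_nil | by []].
Qed.
Lemma zsound env e : zeval env e = den env (znf e).
Proof.
elim: e => [n||a IHa b IHb|a IHa] /=.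
- by rewrite den_atom.
- by [].
- by rewrite den_add IHa IHb.
- by rewrite den_opp IHa.
Qed.
Lemma den_all0 env s : all (fun c => c == 0) s -> den env s = 0.
Proof.
elim: s env => [|a s IH] env //= /andP[/eqP -> H].
by rewrite IH // mulr0z add0r.
Qed.
Lemma zcheck env a b :
  all (fun c => c == 0) (ladd (znf a) (lopp (znf b))) -> zeval env a = zeval env b.
Proof.
move=> H; apply/eqP; rewrite -subr_eq0; apply/eqP.
by rewrite !zsound -den_opp -den_add den_all0.
Qed.
End ZRefl.

Ltac zfind x env n :=
  match env with
  | (?y :: _) => let _ := match goal with _ => unify x y end in constr:(n)
  | (_ :: ?env') => zfind x env' (S n)
  | _ => constr:(n)
  end.
Ltac zlen env :=
  lazymatch env with
  | (_ :: ?env') => let n := zlen env' in constr:(S n)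
  | _ => constr:(O)
  end.
Ltac zappend env x :=
  lazymatch env with
  | (?y :: ?env') => let r := zappend env' x in constr:(y :: r)
  | _ => constr:(x :: env)
  end.
Ltac zreify t env :=
  lazymatch t with
  | @GRing.add _ ?a ?b =>
      let ra := zreify a env in
      lazymatch ra with (?ea, ?env1) =>
      let rb := zreify b env1 in
      lazymatch rb with (?eb, ?env2) => constr:((ZAdd ea eb, env2)) end end
  | @GRing.opp _ ?a =>
      let ra := zreify a env in
      lazymatch ra with (?ea, ?env1) => constr:((ZOpp ea, env1)) end
  | @GRing.zero _ => constr:((ZZero, env))
  | _ =>
      let n := zfind t env 0%N in
      let l := zlen env in
      match constr:(tt) with
      | _ => let _ := match goal with _ => constr_eq n l end in
             let env' := zappend env t in constr:((ZAt n, env'))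
      | _ => constr:((ZAt n, env))
      end
  end.
Ltac zmod :=
  lazymatch goal with
  | |- @eq (GRing.Zmodule.sort ?V) ?a ?b =>
      let ra := zreify a (@nil (GRing.Zmodule.sort V)) in
      lazymatch ra with (?ea, ?env1) =>
      let rb := zreify b env1 in
      lazymatch rb with (?eb, ?env2) =>
        change (zeval env2 ea = zeval env2 eb);
        apply: zcheck; vm_compute; reflexivity end end
  | |- @eq ?T ?a ?b =>
      let ra := zreify a (@nil T) in
      lazymatch ra with (?ea, ?env1) =>
      let rb := zreify b env1 in
      lazymatch rb with (?eb, ?env2) =>
        change (@zeval _ env2 ea = zeval env2 eb);
        apply: zcheck; vm_compute; reflexivity end end
  end.


Lemma zuse (V : zmodType) (p q L R : V) : p = q -> L - R = p - q -> L = R.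
Proof. by move=> -> /eqP; rewrite subrr subr_eq0 => /eqP. Qed.
Lemma zuse0 (V : zmodType) (p L R : V) : p = 0 -> L - R = p -> L = R.
Proof. by move=> -> /eqP; rewrite subr_eq0 => /eqP. Qed.

Section AddF.
Variables (U V : zmodType) (h : U -> V).
Hypothesis hD : forall a b, h (a + b) = h a + h b.
Lemma addf0 : h 0 = 0.
Proof. by apply: (addrI (h 0)); rewrite -hD !addr0. Qed.
Lemma addfN a : h (- a) = - h a.
Proof. by apply: (addrI (h a)); rewrite -hD !subrr addf0. Qed.
Lemma addfB a b : h (a - b) = h a - h b.
Proof. by rewrite hD addfN. Qed.
End AddF.

Section Basic.
Variables (B : nuRing) (D : pzRingType) (S : Esystem B D).
Local Notation d := (es_d S).
Local Notation thl := (es_thl S).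
Local Notation thr := (es_thr S).
Local Notation m := (@nur_mul B).

Lemma d0 : d 0 = 0. Proof. exact: addf0 (es_dD S). Qed.
Lemma dN a : d (- a) = - d a. Proof. by rewrite (addfN (es_dD S)). Qed.
Lemma dB a b : d (a - b) = d a - d b. Proof. by rewrite (addfB (es_dD S)). Qed.
Lemma thl0 x : thl x 0 = 0. Proof. exact: addf0 (es_thlD S x). Qed.
Lemma thlN x a : thl x (- a) = - thl x a. Proof. by rewrite (addfN (es_thlD S x)). Qed.
Lemma thlB x a b : thl x (a - b) = thl x a - thl x b. Proof. by rewrite (addfB (es_thlD S x)). Qed.
Lemma thr0 x : thr 0 x = 0. Proof. exact: addf0 (fun a b => es_thrD S x a b). Qed.
Lemma thrN x a : thr (- a) x = - thr a x. Proof. by rewrite (addfN (fun a b => es_thrD S x a b)). Qed.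
Lemma thrB x a b : thr (a - b) x = thr a x - thr b x. Proof. by rewrite (addfB (fun a b => es_thrD S x a b)). Qed.
Lemma thl0x a : thl 0 a = 0. Proof. exact: addf0 (fun x y => es_thDl S x y a). Qed.
Lemma thlNx x a : thl (- x) a = - thl x a. Proof. by rewrite (addfN (fun x y => es_thDl S x y a)). Qed.
Lemma thlBx x y a : thl (x - y) a = thl x a - thl y a. Proof. by rewrite (addfB (fun x y => es_thDl S x y a)). Qed.
Lemma thr0x a : thr a 0 = 0. Proof. exact: addf0 (fun x y => es_thDr S x y a). Qed.
Lemma thrNx x a : thr a (- x) = - thr a x. Proof. by rewrite (addfN (fun x y => es_thDr S x y a)). Qed.
Lemma thrBx x y a : thr a (x - y) = thr a x - thr a y. Proof. by rewrite (addfB (fun x y => es_thDr S x y a)). Qed.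
Lemma m0l b : m 0 b = 0. Proof. exact: addf0 (fun x y => nur_mulDl x y b). Qed.
Lemma mNl a b : m (- a) b = - m a b. Proof. by rewrite (addfN (fun x y => nur_mulDl x y b)). Qed.
Lemma mBl a c b : m (a - c) b = m a b - m c b. Proof. by rewrite (addfB (fun x y => nur_mulDl x y b)). Qed.
Lemma m0r b : m b 0 = 0. Proof. exact: addf0 (fun x y => nur_mulDr b x y). Qed.
Lemma mNr a b : m b (- a) = - m b a. Proof. by rewrite (addfN (fun x y => nur_mulDr b x y)). Qed.
Lemma mBr a c b : m b (a - c) = m b a - m b c. Proof. by rewrite (addfB (fun x y => nur_mulDr b x y)). Qed.

Lemma ker_l a b : d a = 0 -> m a b = 0.
Proof. by move=> h; rewrite -(es_inner_l S) h thl0x. Qed.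
Lemma ker_r a b : d a = 0 -> m b a = 0.
Proof. by move=> h; rewrite -(es_inner_r S) h thr0x. Qed.
End Basic.
Ltac zdebug_unused :=
  lazymatch goal with
  | |- @eq ?T ?a ?b =>
      let ra := zreify a (@nil T) in
      lazymatch ra with (?ea, ?env1) =>
      let rb := zreify b env1 in
      lazymatch rb with (?eb, ?env2) => idtac ea; idtac eb; idtac env2 end end
  end.
Lemma zuse0' (V : zmodType) (p L R : V) : p = 0 -> R - L = p -> L = R.
Proof. by move=> -> /eqP; rewrite subr_eq0 => /eqP. Qed.
Ltac zh h := first [apply: (zuse0 h); zmod | apply: (zuse0' h); zmod].


Lemma is_d2_sub (B : nuRing) (Q : pzRingType) (L : Q -> B -> B) (R : B -> Q -> B)
  (LB : forall x a b, L x (a - b) = L x a - L x b)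
  (RB : forall x a b, R (a - b) x = R a x - R b x)
  m1 n1 x1 e1 a1 l1 r1 m2 n2 x2 e2 a2 l2 r2 :
  is_d2 L R m1 n1 x1 e1 a1 l1 r1 -> is_d2 L R m2 n2 x2 e2 a2 l2 r2 ->
  is_d2 L R (fun x y => m1 x y - m2 x y) (fun x y => n1 x y - n2 x y)
    (fun x y z => x1 x y z - x2 x y z) (fun x y => e1 x y - e2 x y)
    (fun x y z => a1 x y z - a2 x y z) (fun x y z => l1 x y z - l2 x y z)
    (fun x y z => r1 x y z - r2 x y z).
Proof.
move=> h1 h2 x y z /=.
move: (h1 x y z) (h2 x y z) => [-> [-> [-> [-> ->]]]] [-> [-> [-> [-> ->]]]].
rewrite !LB !RB; split; [zmod|split; [zmod|split; [zmod|split; zmod]]].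
Qed.

Lemma is_d2_ext (B : nuRing) (Q : pzRingType) (L : Q -> B -> B) (R : B -> Q -> B)
  m1 n1 x1 e1 a1 l1 r1 m2 n2 x2 e2 a2 l2 r2 :
  is_d2 L R m1 n1 x1 e1 a1 l1 r1 ->
  (forall x y, m1 x y = m2 x y) -> (forall x y, n1 x y = n2 x y) ->
  (forall x y z, x1 x y z = x2 x y z) -> (forall x y, e1 x y = e2 x y) ->
  (forall x y z, a1 x y z = a2 x y z) -> (forall x y z, l1 x y z = l2 x y z) ->
  (forall x y z, r1 x y z = r2 x y z) ->
  is_d2 L R m2 n2 x2 e2 a2 l2 r2.
Proof.
move=> h hm hn hx he ha hl hr x y z.
rewrite -!hm -!hn -hx -he -ha -hl -hr; exact: h.
Qed.

Section PartA.
Variables (B : nuRing) (D : pzRingType) (S : Esystem B D) (C : pzRingType)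
  (q : {rmorphism D -> C}) (Q : pzRingType) (psi : {rmorphism Q -> C})
  (u : C -> D) (f g : C -> C -> B).
Hypothesis hco : is_coker S q.
Hypothesis htr : transport_data S q u f g.
Local Notation d := (es_d S).
Local Notation thl := (es_thl S).
Local Notation thr := (es_thr S).
Local Notation m := (@nur_mul B).
Local Notation L := (actL S psi u).
Local Notation R := (actR S psi u).

Definition good_sec (X : ext_type S q psi) (s : Q -> ext_car X) :=
  (forall x, ext_p X (s x) = x) /\ (forall x, ext_eps X (s x) = u (psi x)) /\ s 0 = 0.
Definition is_fs (X : ext_type S q psi) (s : Q -> ext_car X) (F G : Q -> Q -> B) :=
  forall x y, ext_j X (F x y) = s x + s y - s (x + y) /\
              ext_j X (G x y) = s x * s y - s (x * y).
Definition fs_ok (F G : Q -> Q -> B) :=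
  cochain2 S (fun x y => f (psi x) (psi y) - F x y) (fun x y => g (psi x) (psi y) - G x y) /\
  is_d2 L R F G (@zeroQ3 B Q) (@zeroQ2 B Q) (@zeroQ3 B Q) (@zeroQ3 B Q) (@zeroQ3 B Q).
Definition coh_rel (F G F' G' : Q -> Q -> B) :=
  exists t : Q -> B, (forall x, in_ker S (t x)) /\ t 0 = 0 /\
    forall x y, F x y = F' x y + (t x + t y - t (x + y)) /\
                G x y = G' x y + (L x (t y) + R (t x) y - t (x * y)).

Lemma LB x a b : L x (a - b) = L x a - L x b. Proof. exact: thlB. Qed.
Lemma RB x a b : R (a - b) x = R a x - R b x. Proof. exact: thrB. Qed.

Lemma isd2_K : is_d2 L R (fun x y => f (psi x) (psi y)) (fun x y => g (psi x) (psi y))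
  (fun x y z => k_xi f (psi x) (psi y) (psi z)) (fun x y => k_eta f (psi x) (psi y))
  (fun x y z => k_alpha S u g (psi x) (psi y) (psi z))
  (fun x y z => k_lambda S u f g (psi x) (psi y) (psi z))
  (fun x y z => k_rho S u f g (psi x) (psi y) (psi z)).
Proof.
move=> x y z; rewrite /k_xi /k_eta /k_alpha /k_lambda /k_rho /actL /actR /=.
by rewrite !rmorphD !rmorphM.
Qed.

Lemma van_iff : pullback_obstruction_vanishes S psi u f g <-> exists F G, fs_ok F G.
Proof.
split.
- move=> [mu [nu [hc hd]]].
  exists (fun x y => f (psi x) (psi y) - mu x y), (fun x y => g (psi x) (psi y) - nu x y).
  split.
    move: hc => [hk hn]; split => x; first by move: (hk x) => hh y; rewrite !subKr; exact: hh.
    by rewrite !subKr; exact: hn.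
  apply: is_d2_ext (is_d2_sub LB RB isd2_K hd) _ _ _ _ _ _ _ => *; by rewrite /= ?subrr.
- move=> [F [G [[hk hn] hd]]].
  exists (fun x y => f (psi x) (psi y) - F x y), (fun x y => g (psi x) (psi y) - G x y).
  split; first by split.
  apply: is_d2_ext (is_d2_sub LB RB isd2_K hd) _ _ _ _ _ _ _ => *; by rewrite /= ?subr0.
Qed.

Section ExtX.
Variable X : ext_type S q psi.
Local Notation j := (ext_j X).
Local Notation p := (ext_p X).
Local Notation eps := (ext_eps X).
Implicit Types s : Q -> ext_car X.

Lemma j0 : j 0 = 0. Proof. exact: addf0 (@ext_jD _ _ _ _ _ _ _ X). Qed.
Lemma jN a : j (- a) = - j a. Proof. by rewrite (addfN (@ext_jD _ _ _ _ _ _ _ X)). Qed.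
Lemma jB a b : j (a - b) = j a - j b. Proof. by rewrite (addfB (@ext_jD _ _ _ _ _ _ _ X)). Qed.
Lemma pj b : p (j b) = 0. Proof. by apply/(ext_exact (j b)); exists b. Qed.
Lemma j_ker e : p e = 0 -> exists b, j b == e.
Proof. by move/(ext_exact e) => [b ->]; exists b. Qed.
Lemma eps_j b : eps (j b) = d b. Proof. exact: ext_eps_j. Qed.

Lemma jL s x b : good_sec s -> j (L x b) = s x * j b.
Proof. by move=> [_ [he _]]; rewrite -ext_eps_l he. Qed.
Lemma jR s x b : good_sec s -> j (R b x) = j b * s x.
Proof. by move=> [_ [he _]]; rewrite -ext_eps_r he. Qed.

Lemma good_ex : exists s, good_sec s.
Proof.
have ex x : exists e, (p e == x) && (eps e == u (psi x)).
  have [e pe] := ext_p_surj X x.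
  have : q (eps e - u (psi x)) = 0.
    by rewrite rmorphB ext_induces pe (proj1 htr) subrr.
  move/(proj2 hco _) => [b hb]; exists (e - j b).
  by rewrite rmorphB pj subr0 pe eqxx rmorphB eps_j -hb subKr eqxx.
exists (fun x => if x == 0 then 0 else xchoose (ex x)); split; [|split].
- move=> x; case: eqP => [->|_]; first by rewrite rmorph0.
  by have /andP[/eqP] := xchooseP (ex x).
- move=> x; case: eqP => [->|_].
    by rewrite rmorph0 rmorph0 (proj1 (proj2 htr)).
  by have /andP[_ /eqP] := xchooseP (ex x).
- by rewrite eqxx.
Qed.

Lemma fs_ex s : good_sec s -> exists F G, is_fs s F G.
Proof.
move=> [hp [he h0]].
have exF x y : exists b, j b == s x + s y - s (x + y).
  by apply: j_ker; rewrite rmorphB rmorphD !hp subrr.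
have exG x y : exists b, j b == s x * s y - s (x * y).
  by apply: j_ker; rewrite rmorphB rmorphM !hp subrr.
exists (fun x y => xchoose (exF x y)), (fun x y => xchoose (exG x y)) => x y.
by split; apply/eqP; [exact: (xchooseP (exF x y))|exact: (xchooseP (exG x y))].
Qed.

Lemma fs_okP s F G : good_sec s -> is_fs s F G -> fs_ok F G.
Proof.
move=> gs hfs; have [hp [he h0]] := gs.
have hF x y := proj1 (hfs x y); have hG x y := proj2 (hfs x y).
have [_ [_ [hdf [hdg hn]]]] := htr.
split; first split.
- move=> x y; rewrite /in_ker !dB -(eps_j (F x y)) -(eps_j (G x y)) hF hG.
  rewrite !rmorphB rmorphD rmorphM !he hdf hdg (rmorphD psi) (rmorphM psi).
  by split; rewrite subrr.
- move=> x; have [hf0 [hf0' [hg0 hg0']]] := hn (psi x).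
  have jz a : j a = 0 -> a = 0 by move=> ha; apply: (@ext_j_inj _ _ _ _ _ _ _ X); rewrite ha j0.
  rewrite (rmorph0 psi) hf0 hf0' hg0 hg0'.
  have -> : F 0 x = 0 by apply: jz; rewrite hF add0r h0 add0r subrr.
  have -> : F x 0 = 0 by apply: jz; rewrite hF addr0 h0 addr0 subrr.
  have -> : G 0 x = 0 by apply: jz; rewrite hG mul0r h0 mul0r subrr.
  have -> : G x 0 = 0 by apply: jz; rewrite hG mulr0 h0 mulr0 subrr.
  by rewrite !subr0.
- move=> x y z; rewrite /zeroQ3 /zeroQ2.
  split; [|split; [|split; [|split]]]; apply: (@ext_j_inj _ _ _ _ _ _ _ X); rewrite j0 !ext_jD ?jN.
  + by rewrite !hF !addrA; zmod.
  + by rewrite !hF [y + x]addrC; zmod.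
  + by rewrite (jL _ _ gs) (jR _ _ gs) !hG ?mulrDr ?mulrDl ?mulrN ?mulNr ?mulrA; zmod.
  + by rewrite (jL _ _ gs) !hG !hF ?mulrDr ?mulrDl ?mulrN ?mulNr; zmod.
  + by rewrite (jR _ _ gs) !hG !hF ?mulrDr ?mulrDl ?mulrN ?mulNr; zmod.
Qed.

Lemma fs_change s1 s2 F1 G1 F2 G2 : good_sec s1 -> good_sec s2 ->
  is_fs s1 F1 G1 -> is_fs s2 F2 G2 -> coh_rel F1 G1 F2 G2.
Proof.
move=> g1 g2 h1 h2; have [hp1 [he1 h01]] := g1; have [hp2 [he2 h02]] := g2.
have ex x : exists b, j b == s1 x - s2 x by apply: j_ker; rewrite rmorphB hp1 hp2 subrr.
pose t x := xchoose (ex x).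
have ht x : j (t x) = s1 x - s2 x by apply/eqP; exact: (xchooseP (ex x)).
have e1 x : s1 x = j (t x) + s2 x by rewrite ht subrK.
exists t; split; [|split].
- by move=> x; rewrite /in_ker -eps_j ht rmorphB he1 he2 subrr.
- by apply: (@ext_j_inj _ _ _ _ _ _ _ X); rewrite ht h01 h02 subrr j0.
- move=> x y; split; apply: (@ext_j_inj _ _ _ _ _ _ _ X).
  + by rewrite (proj1 (h1 x y)) !ext_jD ?jN (proj1 (h2 x y)) !e1; zmod.
  + rewrite (proj2 (h1 x y)) !ext_jD ?jN (proj2 (h2 x y)) (jL _ _ g2) (jR _ _ g2) !e1.
    rewrite !mulrDl !mulrDr -(ext_jM X) (@ker_l _ _ S); last by rewrite /in_ker -eps_j ht rmorphB he1 he2 subrr.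
    by rewrite j0 add0r; zmod.
Qed.
End ExtX.
End PartA.


Record FSdata (B : nuRing) (D : pzRingType) (S : Esystem B D) (C : pzRingType)
  (q : {rmorphism D -> C}) (Q : pzRingType) (psi : {rmorphism Q -> C}) (u : C -> D) := FSD {
  fsF : Q -> Q -> B;
  fsG : Q -> Q -> B;
  fsb0 : B;
  fs_reg : es_regular S;
  fs_b0 : es_d S fsb0 = 1 - u (psi 1);
  fs_u0 : u 0 = 0;
  fs_qu : forall s, q (u s) = s;
  fs_qd : forall b, q (es_d S b) = 0;
  fs_F0 : forall x, fsF 0 x = 0 /\ fsF x 0 = 0 /\ fsG 0 x = 0 /\ fsG x 0 = 0;
  fs_dF : forall x y, es_d S (fsF x y) = u (psi x) + u (psi y) - u (psi (x + y));
  fs_dG : forall x y, es_d S (fsG x y) = u (psi x) * u (psi y) - u (psi (x * y));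
  fs_eq : is_d2 (actL S psi u) (actR S psi u) fsF fsG (@zeroQ3 B Q) (@zeroQ2 B Q)
            (@zeroQ3 B Q) (@zeroQ3 B Q) (@zeroQ3 B Q) }.

Definition Ecar B D S C q Q psi u (P : @FSdata B D S C q Q psi u) : Type :=
  (nur_car B * Q)%type.

Section Build.
Variables (B : nuRing) (D : pzRingType) (S : Esystem B D) (C : pzRingType)
  (q : {rmorphism D -> C}) (Q : pzRingType) (psi : {rmorphism Q -> C}) (u : C -> D)
  (P : FSdata S q psi u).
Local Notation d := (es_d S).
Local Notation thl := (es_thl S).
Local Notation thr := (es_thr S).
Local Notation m := (@nur_mul B).
Local Notation F := (fsF P).
Local Notation G := (fsG P).
Local Notation b0 := (fsb0 P).
Local Notation U x := (u (psi x)).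
Local Notation E := (Ecar P).

HB.instance Definition _ := Choice.copy E (nur_car B * Q)%type.

Definition Eadd (a b : E) : E := (a.1 + b.1 + F a.2 b.2, a.2 + b.2).
Definition Eopp (a : E) : E := (- a.1 - F a.2 (- a.2), - a.2).
Definition Ezero : E := (0, 0).
Definition Emul (a b : E) : E :=
  (m a.1 b.1 + thl (U a.2) b.1 + thr a.1 (U b.2) + G a.2 b.2, a.2 * b.2).
Definition H1 := G 1 1 + thr b0 (U 1).
Definition Eone : E := (b0 - H1, 1).

Lemma F0l x : F 0 x = 0. Proof. by have [] := fs_F0 P x. Qed.
Lemma F0r x : F x 0 = 0. Proof. by have [_ []] := fs_F0 P x. Qed.
Lemma G0l x : G 0 x = 0. Proof. by have [_ [_ []]] := fs_F0 P x. Qed.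
Lemma G0r x : G x 0 = 0. Proof. by have [_ [_ [_]]] := fs_F0 P x. Qed.
Lemma U0 : U 0 = 0. Proof. by rewrite rmorph0 (fs_u0 P). Qed.
Lemma reg1 a : thl 1 a = a. Proof. by have [] := fs_reg P. Qed.
Lemma reg2 a : thr a 1 = a. Proof. by have [_ []] := fs_reg P. Qed.
Lemma reg3 x y a : thl x (thr a y) = thr (thl x a) y. Proof. by have [_ [_]] := fs_reg P. Qed.
Lemma UD x y : U (x + y) = U x + U y - d (F x y).
Proof. by rewrite (fs_dF P); zmod. Qed.
Lemma UM x y : U (x * y) = U x * U y - d (G x y).
Proof. by rewrite (fs_dG P); zmod. Qed.
Lemma U1 : U 1 = 1 - d b0.
Proof. by rewrite (fs_b0 P); zmod. Qed.
Lemma Fxi x y z : F x y + F (x + y) z - F y z - F x (y + z) = 0.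
Proof. by have [<- _] := fs_eq P x y z. Qed.
Lemma Feta x y : F x y - F y x = 0.
Proof. by have [_ [<- _]] := fs_eq P x y x. Qed.
Lemma Gal x y z : thl (U x) (G y z) + G x (y * z) - thr (G x y) (U z) - G (x * y) z = 0.
Proof. by have [_ [_ [<- _]]] := fs_eq P x y z. Qed.
Lemma Gla x y z : thl (U x) (F y z) + G x (y + z) - G x y - G x z - F (x * y) (x * z) = 0.
Proof. by have [_ [_ [_ [<- _]]]] := fs_eq P x y z. Qed.
Lemma Grh x y z : thr (F x y) (U z) + G (x + y) z - G x z - G y z - F (x * z) (y * z) = 0.
Proof. by have [_ [_ [_ [_ <-]]]] := fs_eq P x y z. Qed.

Lemma EaddA : associative Eadd.
Proof.
move=> [a x] [b y] [c z]; rewrite /Eadd /=; congr (_, _); last by rewrite addrA.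
zh (Fxi x y z).
Qed.
Lemma EaddC : commutative Eadd.
Proof.
move=> [a x] [b y]; rewrite /Eadd /=; congr (_, _); last by rewrite addrC.
zh (Feta x y).
Qed.
Lemma Eadd0 : left_id Ezero Eadd.
Proof. by move=> [a x]; rewrite /Eadd /= F0l !add0r addr0. Qed.
Lemma EaddN : left_inverse Ezero Eopp Eadd.
Proof.
move=> [a x]; rewrite /Eadd /Eopp /Ezero /=; congr (_, _); last by rewrite addNr.
zh (Feta x (- x)).
Qed.

Ltac bexp := rewrite ?(es_thlD S) ?thlN ?(es_thrD S) ?thrN ?(es_thDl S) ?thlNx
  ?(es_thDr S) ?thrNx ?nur_mulDl ?nur_mulDr ?mNl ?mNr ?(es_thMl S) ?(es_thMr S)
  ?(es_inner_l S) ?(es_inner_r S) ?nur_mulA ?(es_thlM S) ?(es_thrM S) ?(es_thlr S) ?reg3.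

Lemma EmulA : associative Emul.
Proof.
move=> [a x] [b y] [c z]; rewrite /Emul /=; congr (_, _); last by rewrite mulrA.
rewrite !UM; bexp; rewrite ?mulrA; zh (Gal x y z).
Qed.
Lemma EmulDl : left_distributive Emul Eadd.
Proof.
move=> [a x] [b y] [c z]; rewrite /Emul /Eadd /=; congr (_, _); last by rewrite mulrDl.
rewrite UD; bexp; rewrite ?mulrDl; zh (Grh x y z).
Qed.
Lemma EmulDr : right_distributive Emul Eadd.
Proof.
move=> [a x] [b y] [c z]; rewrite /Emul /Eadd /=; congr (_, _); last by rewrite mulrDr.
rewrite UD; bexp; rewrite ?mulrDr; zh (Gla x y z).
Qed.

Lemma kerH1 : d H1 = 0.
Proof.
rewrite /H1 (es_dD S) (es_d_thr S) (fs_dG P) (fs_b0 P) mul1r mulrBl mul1r; zmod.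
Qed.
Lemma auxL a : thl (U 1) a = a - thr b0 (d a).
Proof. by rewrite U1 thlBx reg1 (es_inner_l S) (es_inner_r S). Qed.
Lemma auxR a : thr a (U 1) = a - thl (d a) b0.
Proof. by rewrite U1 thrBx reg2 (es_inner_l S) (es_inner_r S). Qed.
Lemma U1b0 : thl (U 1) b0 = thr b0 (U 1).
Proof. by rewrite auxL auxR (es_inner_l S) (es_inner_r S). Qed.
Lemma HL y : G 1 y = thr H1 (U y) - thr b0 (U y).
Proof.
have A := Gal 1 1 y; rewrite !mul1r auxL (fs_dG P) mul1r thrBx (es_thMr S) in A.
rewrite /H1 (es_thrD S); zh A.
Qed.
Lemma HR y : G y 1 = thl (U y) H1 - thl (U y) b0.
Proof.
have A := Gal y 1 1; rewrite !mulr1 auxR (fs_dG P) mulr1 thlBx (es_thMl S) U1b0 in A.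
rewrite /H1 (es_thlD S); zh A.
Qed.

Lemma Emul1 : left_id Eone Emul.
Proof.
move=> [b y]; rewrite /Emul /Eone /=; congr (_, _); last by rewrite mul1r.
rewrite HL mBl (@ker_l _ _ S H1 b kerH1) U1 thlBx reg1 (es_inner_l S) thrB; zmod.
Qed.
Lemma Emulr1 : right_id Eone Emul.
Proof.
move=> [b y]; rewrite /Emul /Eone /=; congr (_, _); last by rewrite mulr1.
rewrite HR mBr (@ker_r _ _ S H1 b kerH1) U1 thrBx reg2 (es_inner_r S) thlB; zmod.
Qed.

HB.instance Definition _ := GRing.isPzRing.Build E EaddA EaddC Eadd0 EaddN
  EmulA Emul1 Emulr1 EmulDl EmulDr.

Definition Ep (a : E) : Q := a.2.
Lemma Ep_zmod : zmod_morphism Ep. Proof. by []. Qed.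
HB.instance Definition _ := GRing.isZmodMorphism.Build E Q Ep Ep_zmod.
Lemma Ep_mon : monoid_morphism Ep. Proof. by []. Qed.
HB.instance Definition _ := GRing.isMonoidMorphism.Build E Q Ep Ep_mon.

Definition Eeps (a : E) : D := d a.1 + U a.2.
Lemma EepsD a b : Eeps (a + b) = Eeps a + Eeps b.
Proof.
case: a b => [a x] [b y]; change (Eeps (Eadd (a, x) (b, y)) = Eeps (a, x) + Eeps (b, y)).
rewrite /Eeps /Eadd /= !(es_dD S) UD; zmod.
Qed.
Lemma Eeps_zmod : zmod_morphism Eeps.
Proof. by move=> a b; rewrite (addfB EepsD). Qed.
HB.instance Definition _ := GRing.isZmodMorphism.Build E D Eeps Eeps_zmod.
Lemma Eeps_mon : monoid_morphism Eeps.
Proof.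
split.
  change (d (b0 - H1) + U 1 = 1); rewrite dB kerH1 (fs_b0 P); zmod.
move=> [a x] [b y]; change (Eeps (Emul (a, x) (b, y)) = Eeps (a, x) * Eeps (b, y)).
rewrite /Eeps /Emul /= !(es_dD S) (es_dM S) (es_d_thl S) (es_d_thr S) UM (fs_dG P).
rewrite !mulrDl !mulrDr; zmod.
Qed.
HB.instance Definition _ := GRing.isMonoidMorphism.Build E D Eeps Eeps_mon.

Definition Ej (b : B) : E := (b, 0).

Lemma Ej_D a b : Ej (a + b) = Ej a + Ej b.
Proof. by change ((a + b, 0) = Eadd (a, 0) (b, 0)); rewrite /Eadd /= F0l !addr0. Qed.
Lemma Ej_M a b : Ej (nur_mul a b) = Ej a * Ej b.
Proof.
change ((nur_mul a b, 0) = Emul (a, 0) (b, 0)).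
by rewrite /Emul /= U0 thl0x thr0x G0r !addr0 mulr0.
Qed.
Lemma Ej_inj : injective Ej. Proof. by move=> a b [->]. Qed.
Lemma Ep_surj y : exists e, (Ep : {rmorphism E -> Q}) e = y.
Proof. by exists ((0, y) : E). Qed.
Lemma E_exact (e : E) : (Ep : {rmorphism E -> Q}) e = 0 <-> exists b, e = Ej b.
Proof.
case: e => a x; split; first by move=> /= ->; exists a.
by move=> [b [_ ->]].
Qed.
Lemma E_eps_j b : (Eeps : {rmorphism E -> D}) (Ej b) = d b.
Proof. by rewrite /= /Eeps /= U0 addr0. Qed.
Lemma E_eps_l (e : E) b : Ej (thl ((Eeps : {rmorphism E -> D}) e) b) = e * Ej b.
Proof.
case: e => a x; change ((thl (d a + U x) b, 0) = Emul (a, x) (b, 0)).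
by rewrite /Emul /= U0 thr0x G0r !addr0 mulr0 (es_thDl S) (es_inner_l S).
Qed.
Lemma E_eps_r (e : E) b : Ej (thr b ((Eeps : {rmorphism E -> D}) e)) = Ej b * e.
Proof.
case: e => a x; change ((thr b (d a + U x), 0) = Emul (b, 0) (a, x)).
by rewrite /Emul /= U0 thl0x G0l addr0 mul0r (es_thDr S) (es_inner_r S) addr0.
Qed.
Lemma E_ind (e : E) :
  q ((Eeps : {rmorphism E -> D}) e) = psi ((Ep : {rmorphism E -> Q}) e).
Proof. by case: e => a x; rewrite /= /Eeps /= rmorphD (fs_qd P) (fs_qu P) add0r. Qed.

Definition ext_of : ext_type S q psi :=
  @ExtT B D S C q Q psi E Ej Ep Eeps Ej_D Ej_M Ej_inj Ep_surj E_exact E_eps_j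
    E_eps_l E_eps_r E_ind.

Definition s0 (x : Q) : ext_car ext_of := ((0, x) : E).
Lemma s0_good : good_sec u s0.
Proof.
split; [by []|split; [|by []]].
by move=> x; rewrite /= /Eeps /= d0 add0r.
Qed.
Lemma s0_fs : is_fs s0 F G.
Proof.
move=> x y; split; apply/eqP; rewrite eq_sym subr_eq; apply/eqP.
- change (Eadd (0, x) (0, y) = Eadd (F x y, 0) (0, x + y)).
  by rewrite /Eadd /= F0l !addr0 !add0r.
- change (Emul (0, x) (0, y) = Eadd (G x y, 0) (0, x * y)).
  by rewrite /Emul /Eadd /= m0l thl0 thr0 F0l !add0r !addr0.
Qed.
End Build.


Section PartC.
Variables (B : nuRing) (D : pzRingType) (S : Esystem B D) (C : pzRingType)
  (q : {rmorphism D -> C}) (Q : pzRingType) (psi : {rmorphism Q -> C})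
  (u : C -> D).
Local Notation d := (es_d S).
Local Notation thl := (es_thl S).
Local Notation thr := (es_thr S).
Local Notation m := (@nur_mul B).
Local Notation L := (actL S psi u).
Local Notation R := (actR S psi u).

Lemma equiv_of (X Y : ext_type S q psi) (sX : Q -> ext_car X) (sY : Q -> ext_car Y)
  FX GX FY GY : good_sec u sX -> good_sec u sY -> is_fs sX FX GX -> is_fs sY FY GY ->
  coh_rel S psi u FX GX FY GY -> ext_equiv X Y.
Proof.
move=> gX gY fX fY [t [tker [t0 hrel]]].
have [hpX [heX h0X]] := gX; have [hpY [heY h0Y]] := gY.
have exb e : exists b, ext_j X b == e - sX (ext_p X e).
  by apply: j_ker; rewrite rmorphB hpX subrr.
pose beta e := xchoose (exb e).
have hb e : ext_j X (beta e) = e - sX (ext_p X e) by apply/eqP; exact: (xchooseP (exb e)).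
have dec e : e = sX (ext_p X e) + ext_j X (beta e) by rewrite hb addrC subrK.
have pXs x b : ext_p X (sX x + ext_j X b) = x by rewrite rmorphD hpX pj addr0.
have beta_s x b : beta (sX x + ext_j X b) = b.
  by apply: (@ext_j_inj _ _ _ _ _ _ _ X); rewrite hb pXs addrC addKr.
pose eta e := sY (ext_p X e) + ext_j Y (beta e + t (ext_p X e)).
have eta_s x b : eta (sX x + ext_j X b) = sY x + ext_j Y (b + t x).
  by rewrite /eta beta_s pXs.
have k1 x b : m (t x) b = 0 := ker_l b (tker x).
have k2 x b : m b (t x) = 0 := ker_r b (tker x).
have eD : {morph eta : a b / a + b}.
  move=> e1 e2; rewrite (dec e1) (dec e2).
  move: (ext_p X e1) (beta e1) (ext_p X e2) (beta e2) => x1 b1 x2 b2.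
  have -> : sX x1 + ext_j X b1 + (sX x2 + ext_j X b2)
          = sX (x1 + x2) + ext_j X (b1 + b2 + FX x1 x2).
    by rewrite !ext_jD (proj1 (fX x1 x2)); zmod.
  rewrite !eta_s (proj1 (hrel x1 x2)) !ext_jD ?jN (proj1 (fY x1 x2)); zmod.
have eM : {morph eta : a b / a * b}.
  move=> e1 e2; rewrite (dec e1) (dec e2).
  move: (ext_p X e1) (beta e1) (ext_p X e2) (beta e2) => x1 b1 x2 b2.
  have -> : (sX x1 + ext_j X b1) * (sX x2 + ext_j X b2)
          = sX (x1 * x2) + ext_j X (GX x1 x2 + L x1 b2 + R b1 x2 + m b1 b2).
    rewrite !ext_jD (proj2 (fX x1 x2)) (jL _ _ gX) (jR _ _ gX) (ext_jM X).
    rewrite !mulrDl !mulrDr; zmod.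
  rewrite !eta_s (proj2 (hrel x1 x2)) !mulrDl !mulrDr -(jL _ _ gY) -(jR _ _ gY) -(ext_jM Y).
  have eG : sY x1 * sY x2 = ext_j Y (GY x1 x2) + sY (x1 * x2).
    by rewrite (proj2 (fY x1 x2)) subrK.
  rewrite eG /actL /actR !(es_thlD S) !(es_thrD S) !nur_mulDl !nur_mulDr !k1 !k2.
  rewrite !ext_jD ?jN ?j0; zmod.
have eZ : zmod_morphism eta by move=> a b; rewrite (addfB eD).
have e1 : eta 1 = 1.
  have [c hc] : exists c, ext_j Y c == 1 - sY 1.
    by apply: j_ker; rewrite rmorphB rmorph1 hpY subrr.
  have he0 : eta (sX 1 + ext_j X (c - t 1)) = 1.
    by rewrite eta_s subrK (eqP hc) addrC subrK.
  by rewrite -[eta 1]mulr1 -{1}he0 -eM mul1r he0.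
have eMon : monoid_morphism eta by split; [exact: e1|exact: eM].
exists (HB.pack_for {rmorphism ext_car X -> ext_car Y} eta
  (GRing.isZmodMorphism.Build _ _ eta eZ) (GRing.isMonoidMorphism.Build _ _ eta eMon)).
split; [|split] => /=.
- move=> b; have -> : ext_j X b = sX 0 + ext_j X b by rewrite h0X add0r.
  by rewrite eta_s t0 h0Y addr0 add0r.
- move=> e; rewrite (dec e); move: (ext_p X e) (beta e) => x b.
  by rewrite eta_s rmorphD hpY pj addr0 pXs.
- move=> e; rewrite (dec e); move: (ext_p X e) (beta e) => x b.
  rewrite eta_s !rmorphD heY heX !eps_j (es_dD S) (tker x) addr0 //.
Qed.

Lemma transfer (X Y : ext_type S q psi) (eta : {rmorphism ext_car X -> ext_car Y})
  (sX : Q -> ext_car X) F G :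
  (forall b, eta (ext_j X b) = ext_j Y b) -> (forall e, ext_p Y (eta e) = ext_p X e) ->
  (forall e, ext_eps Y (eta e) = ext_eps X e) ->
  good_sec u sX -> is_fs sX F G ->
  good_sec u (fun x => eta (sX x)) /\ is_fs (fun x => eta (sX x)) F G.
Proof.
move=> hj hp he [hpX [heX h0X]] hf; split; first split.
- by move=> x; rewrite hp hpX.
- by split; [move=> x; rewrite he heX|rewrite h0X rmorph0].
- move=> x y; rewrite -!hj (proj1 (hf x y)) (proj2 (hf x y)).
  by rewrite !rmorphB rmorphD rmorphM.
Qed.

End PartC.


Section Main.
Variables (B : nuRing) (D : pzRingType) (S : Esystem B D) (C : pzRingType)
  (q : {rmorphism D -> C}) (Q : pzRingType) (psi : {rmorphism Q -> C})
  (u : C -> D) (f g : C -> C -> B).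
Hypothesis hreg : es_regular S.
Hypothesis hco : is_coker S q.
Hypothesis htr : transport_data S q u f g.
Local Notation d := (es_d S).

Lemma ok_dF F G : fs_ok S psi u f g F G ->
  forall x y, d (F x y) = u (psi x) + u (psi y) - u (psi (x + y)).
Proof.
move=> [[hk _] _] x y; have /eqP := proj1 (hk x y); rewrite /in_ker dB subr_eq0 => /eqP <-.
by rewrite (proj1 (proj2 (proj2 htr))) rmorphD.
Qed.
Lemma ok_dG F G : fs_ok S psi u f g F G ->
  forall x y, d (G x y) = u (psi x) * u (psi y) - u (psi (x * y)).
Proof.
move=> [[hk _] _] x y; have /eqP := proj2 (hk x y); rewrite /in_ker dB subr_eq0 => /eqP <-.
by rewrite (proj1 (proj2 (proj2 (proj2 htr)))) rmorphM.
Qed.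
Lemma ok_F0 F G : fs_ok S psi u f g F G ->
  forall x, F 0 x = 0 /\ F x 0 = 0 /\ G 0 x = 0 /\ G x 0 = 0.
Proof.
move=> [[_ hn] _] x; have [h1 [h2 [h3 h4]]] := hn x.
have [_ [_ [_ [_ hz]]]] := htr; have [z1 [z2 [z3 z4]]] := hz (psi x).
move: h1 h2 h3 h4; rewrite (rmorph0 psi) z1 z2 z3 z4 !sub0r => /eqP; rewrite oppr_eq0 => /eqP ->.
move=> /eqP; rewrite oppr_eq0 => /eqP ->.
move=> /eqP; rewrite oppr_eq0 => /eqP ->.
by move=> /eqP; rewrite oppr_eq0 => /eqP ->.
Qed.

Lemma exb0 : exists b, d b == 1 - u (psi 1).
Proof.
have : q (1 - u (psi 1)) = 0 by rewrite rmorphB rmorph1 (proj1 htr) rmorph1 subrr.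
by move/(proj2 hco _) => [b ->]; exists b.
Qed.

Definition mkP F G (h : fs_ok S psi u f g F G) : FSdata S q psi u :=
  @FSD B D S C q Q psi u F G (xchoose exb0) hreg (eqP (xchooseP exb0))
    (proj1 (proj2 htr)) (proj1 htr)
    (fun b => proj2 (proj2 hco (d b)) (ex_intro _ b erefl))
    (ok_F0 h) (ok_dF h) (ok_dG h) (proj2 h).

Lemma fs_ok_diff F G F' G' : fs_ok S psi u f g F G -> cochain2 S F' G' ->
  is_d2 (actL S psi u) (actR S psi u) F' G' (@zeroQ3 B Q) (@zeroQ2 B Q)
    (@zeroQ3 B Q) (@zeroQ3 B Q) (@zeroQ3 B Q) ->
  fs_ok S psi u f g (fun x y => F x y - F' x y) (fun x y => G x y - G' x y).
Proof.
move=> [[hk hn] hd] [hk' hn'] hd'; split; first split.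
- move=> x y; have [a1 a2] := hk x y; have [b1 b2] := hk' x y.
  move: a1 a2 b1 b2; rewrite /in_ker !dB => a1 a2 b1 b2.
  by rewrite b1 b2 !subr0 a1 a2.
- move=> x; have [a1 [a2 [a3 a4]]] := hn x; have [b1 [b2 [b3 b4]]] := hn' x.
  by rewrite b1 b2 b3 b4 !subr0 a1 a2 a3 a4.
- apply: is_d2_ext (is_d2_sub (LB S psi u) (RB S psi u) hd hd') _ _ _ _ _ _ _ => *;
  by rewrite /= /zeroQ3 /zeroQ2 ?subr0.
Qed.
End Main.

Theorem mainTheorem9 (B : nuRing) (D : pzRingType) (S : Esystem B D)
  (C : pzRingType) (q : {rmorphism D -> C})
  (Q : pzRingType) (psi : {rmorphism Q -> C})
  (u : C -> D) (f g : C -> C -> B) :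
  es_regular S -> is_coker S q -> transport_data S q u f g ->
  (inhabited (ext_type S q psi) <->
     pullback_obstruction_vanishes S psi u f g) /\
  (pullback_obstruction_vanishes S psi u f g ->
     ext_H2_bijection S q psi u).
Proof.
move=> hreg hco htr; split.
  split.
  - move=> [X]; apply/van_iff.
    have [s gs] := good_ex hco htr X.
    have [F [G fs]] := fs_ex gs.
    by exists F, G; exact: (fs_okP htr gs fs).
  - by move/van_iff => [F [G h]]; constructor; exact: ext_of (mkP hreg hco htr h).
move=> /van_iff [Fb [Gb hb]].
pose sec (X : ext_type S q psi) := proj1_sig (constructive_indefinite_description _ (good_ex hco htr X)).
have gsec (X : ext_type S q psi) : good_sec u (sec X)
  := proj2_sig (constructive_indefinite_description _ (good_ex hco htr X)).
have FGex (X : ext_type S q psi) : { FG : (Q -> Q -> B) * (Q -> Q -> B) | is_fs (sec X) FG.1 FG.2 }.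
  apply: constructive_indefinite_description.
  by have [F [G h]] := fs_ex (gsec X); exists (F, G).
pose FX (X : ext_type S q psi) := (sval (FGex X)).1.
pose GX (X : ext_type S q psi) := (sval (FGex X)).2.
have fsX (X : ext_type S q psi) : is_fs (sec X) (FX X) (GX X) := svalP (FGex X).
have okX (X : ext_type S q psi) : fs_ok S psi u f g (FX X) (GX X) := fs_okP htr (gsec X) (fsX X).
exists (fun X => (fun x y => Fb x y - FX X x y, fun x y => Gb x y - GX X x y)).
split; [|split].
- move=> X; split; first split.
  + move=> x y; rewrite /in_ker /= !dB (ok_dF htr hb) (ok_dF htr (okX X)).
    by rewrite (ok_dG htr hb) (ok_dG htr (okX X)) !subrr.
  + move=> x /=; have [a1 [a2 [a3 a4]]] := ok_F0 htr hb x.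
    have [b1 [b2 [b3 b4]]] := ok_F0 htr (okX X) x.
    by rewrite a1 a2 a3 a4 b1 b2 b3 b4 subrr.
  + apply: is_d2_ext (is_d2_sub (LB S psi u) (RB S psi u) (proj2 hb) (proj2 (okX X)))
      _ _ _ _ _ _ _ => *; by rewrite /= /zeroQ3 /zeroQ2 ?subr0.
- move=> X Y; split.
  + move=> [eta [hj [hp he]]].
    have [gs fs] := transfer hj hp he (gsec X) (fsX X).
    have [t [tk [t0 hrel]]] := fs_change gs (gsec Y) fs (fsX Y).
    exists t; split; [exact: tk|split; [exact: t0|]] => x y /=.
    by have [r1 r2] := hrel x y; rewrite r1 r2; split; zmod.
  + move=> [t [tk [t0 hrel]]].
    apply: (equiv_of (gsec X) (gsec Y) (fsX X) (fsX Y)).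
    exists t; split; [exact: tk|split; [exact: t0|]] => x y.
    have [r1 r2] := hrel x y; rewrite /= in r1 r2.
    by split; [apply: (zuse r1)|apply: (zuse r2)]; zmod.
- move=> c [[ck cn] cd].
  have hok := fs_ok_diff hb (conj ck cn) cd.
  pose P := mkP hreg hco htr hok.
  exists (ext_of P).
  have [t [tk [t0 hrel]]] := fs_change (gsec (ext_of P)) (s0_good P) (fsX (ext_of P)) (s0_fs P).
  exists t; split; [exact: tk|split; [exact: t0|]] => x y.
  have [r1 r2] := hrel x y; rewrite /= in r1 r2 *.
  by rewrite r1 r2; split; zmod.
Qed.
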